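(* Let $\mathcal{F} \subseteq \{0,1\}^n$ be a feasible set, let $c \in \mathbb{Z}^n$, and let $\ell \in \mathbb{Z}_+$. Let $c' \in \mathbb{Z}^n$ be the $\ell$-bit rounding of $c$, and let $x^\star \in \mathcal{F}$ be an optimal solution of $\max\{(c')^\top x : x \in \mathcal{F}\}$. Then $x^\star$ is $\frac{1}{2^{\ell-1}}$-optimal with respect to the original objective $c$ for the problem $\max\{c^\top x : x \in \mathcal{F}\}$.
   Context: Consider the binary program $\max\{c^\top x : x \in \mathcal{F}\}$ with $\mathcal{F} \subseteq \{0,1\}^n$ and $c = (c_1,\dots,c_n)^\top \in \mathbb{Z}^n$. For each $i \in [n] = \{1,\dots,n\}$, write $c_i = \mathrm{sgn}(c_i) \sum_{j=0}^{k_i-1} c_{ij} 2^j$, where $\mathrm{sgn}(c_i) \in \{0,\pm 1\}$ is the sign of $c_i$, $k_i = \lceil \log_2(|c_i|+1) \rceil$, and $c_{ij} \in \{0,1\}$ are the binary digits of $|c_i|$. For $\ell \in \mathbb{Z}_+$, the $\ell$-bit rounding of $c_i$ is $c'_i = \mathrm{sgn}(c_i) \sum_{j = k_i-\ell}^{k_i-1} c_{ij} 2^j$, i.e., the lowest $k_i - \ell$ bits of $|c_i|$ are set to zero and the top $\ell$ bits are kept (the sum starts at $j = \max(0, k_i-\ell)$; if $\ell \ge k_i$, then $c'_i = c_i$). The $\ell$-bit rounding of $c$ is $c' = (c'_1,\dots,c'_n)^\top$. For $\varepsilon \ge 0$, a feasible point $x^\star \in \mathcal{F}$ is called $\varepsilon$-optimal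 for the objective function $c$ if there exists $\tilde c \in \mathbb{R}^n$ such that, for all $j \in [n]$, $(1-\varepsilon)c_j \le \tilde c_j \le (1+\varepsilon)c_j$ if $c_j \ge 0$, and $(1+\varepsilon)c_j \le \tilde c_j \le (1-\varepsilon)c_j$ if $c_j < 0$, and $x^\star$ is an optimal solution of $\max\{\tilde c^\top x : x \in \mathcal{F}\}$. *)

(* Defs.v *)
From HB Require Import structures.
From mathcomp Require Import all_boot all_order all_algebra.
Set Implicit Arguments. Unset Strict Implicit. Unset Printing Implicit Defensive.
Import Order.TTheory GRing.Theory Num.Theory.
Local Open Scope ring_scope.

(* k = ceil(log2(|c|+1)) = smallest e with |c|+1 <= 2^e (up_log). *)
Definition nbits (c : int) : nat := up_log 2 (`|c|%N + 1).

Definition bitc (c : int) (j : nat) : nat := (`|c|%N %/ 2 ^ j) %% 2.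

Definition round_bits (l : nat) (c : int) : int :=
  sgz c * (\sum_(nbits c - l <= j < nbits c) bitc c j * 2 ^ j)%N%:Z.

Definition round_vec (n l : nat) (c : 'I_n -> int) : 'I_n -> int :=
  fun i => round_bits l (c i).

Definition obj (R : numDomainType) (n : nat) (c : 'I_n -> R)
  (x : {ffun 'I_n -> bool}) : R := \sum_(i < n) c i * (x i)%:R.

Definition is_optimal (R : numDomainType) (n : nat)
  (F : {set {ffun 'I_n -> bool}}) (c : 'I_n -> R) (x : {ffun 'I_n -> bool}) :=
  x \in F /\ forall y, y \in F -> obj c y <= obj c x.

Definition eps_optimal (R : realFieldType) (n : nat)
  (F : {set {ffun 'I_n -> bool}}) (c : 'I_n -> int) (eps : R)
  (x : {ffun 'I_n -> bool}) :=
  x \in F /\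
  exists ct : 'I_n -> R,
    (forall j : 'I_n,
       if (0 <= c j)%R
       then (1 - eps) * (c j)%:~R <= ct j <= (1 + eps) * (c j)%:~R
       else (1 + eps) * (c j)%:~R <= ct j <= (1 - eps) * (c j)%:~R)
    /\ is_optimal F ct x.

(* Main.v *)
Require Import Defs.
From HB Require Import structures.
From mathcomp Require Import all_boot all_order all_algebra.
From mathcomp Require Import zify ring lra.
Import Order.TTheory GRing.Theory Num.Theory.

Lemma sum_bits (N m k : nat) : m <= k ->
  (\sum_(m <= j < k) ((N %/ 2 ^ j) %% 2) * 2 ^ j + (N %/ 2 ^ k) * 2 ^ k = (N %/ 2 ^ m) * 2 ^ m)%N.
Proof.
elim: k => [|k IH]; first by rewrite leqn0 => /eqP ->; rewrite big_geq.
rewrite leq_eqVlt => /orP[/eqP <-|]; first by rewrite big_geq.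
rewrite ltnS => mk; rewrite big_nat_recr //= -IH //.
have -> : (N %/ 2 ^ k.+1 = (N %/ 2 ^ k) %/ 2)%N by rewrite expnSr divnMA.
rewrite -addnA; congr (_ + _)%N.
set q := (N %/ 2 ^ k)%N.
rewrite [in RHS](divn_eq q 2) mulnDl expnSr; ring.
Qed.

Lemma round_nat (c : int) (l : nat) :
  let a := `|c|%N in let r := (\sum_(nbits c - l <= j < nbits c) bitc c j * 2 ^ j)%N in
  (r <= a)%N /\ ((a - r) * 2 ^ l <= 2 * a)%N.
Proof.
move=> a r.
set k := nbits c.
have aK : (a < 2 ^ k)%N.
  have := up_logP (a + 1) (isT : (1 < 2)%N). rewrite {1}addn1. exact.
have hs := sum_bits a (k - l) k (leq_subr l k).
rewrite (divn_small aK) mul0n addn0 in hs.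
have ra : r = (a %/ 2 ^ (k - l) * 2 ^ (k - l))%N by rewrite -hs.
have e : (a - r = a %% 2 ^ (k - l))%N.
  by rewrite ra {1}(divn_eq a (2 ^ (k - l))) addnC addnK.
split; first by rewrite ra leq_trunc_div.
rewrite e.
case: (leqP k l) => kl.
  by move: kl; rewrite -subn_eq0 => /eqP ->; rewrite expn0 modn1.
have k0 : (0 < k)%N by apply: leq_ltn_trans kl.
have : (2 ^ k.-1 < a + 1)%N.
  apply: up_log_gtn => //; move: k0; rewrite /k /nbits up_log_gt0 => /andP[].
  by [].
rewrite addn1 ltnS => hk.
have hm : (a %% 2 ^ (k - l) < 2 ^ (k - l))%N by rewrite ltn_mod expn_gt0.
apply: leq_trans (_ : 2 ^ (k - l) * 2 ^ l <= _)%N.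
  by rewrite leq_mul2r ltnW ?orbT.
rewrite -expnD subnK ?(ltnW kl) //.
by rewrite -[in leqLHS](prednK k0) expnS leq_mul2l.
Qed.

Local Open Scope ring_scope.

Lemma real_bound (R : realFieldType) (a r : nat) (l : nat) :
  (r <= a)%N -> ((a - r) * 2 ^ l <= 2 * a)%N ->
  (r%:R <= a%:R :> R) /\ (a%:R - r%:R <= (2 / 2 ^+ l) * a%:R :> R).
Proof.
move=> ra h; split; first by rewrite ler_nat.
have p0 : (0 : R) < 2 ^+ l by rewrite exprn_gt0.
rewrite mulrAC ler_pdivlMr // -(natrB _ ra) -natrX -natrM.
rewrite (_ : 2 * a%:R = (2 * a)%:R :> R) ?ler_nat //; last by rewrite natrM.
Qed.

Theorem lemma1 (R : realFieldType) (n : nat) (F : {set {ffun 'I_n -> bool}})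
  (c : 'I_n -> int) (l : nat) (xstar : {ffun 'I_n -> bool}) :
  is_optimal F (fun i => ((round_vec l c i)%:~R : R)) xstar ->
  eps_optimal F c (2 / 2 ^+ l : R) xstar.
Proof.
move=> opt; split; first by case: opt.
exists (fun i => ((round_vec l c i)%:~R : R)); split=> // j.
rewrite /round_vec /round_bits.
have [h1 h2] := round_nat (c j) l.
move: h1 h2.
set r := (\sum_(_ <= _ < _) _)%N.
move: (c j) r => x r h1 h2.
have [hr hb] := real_bound R _ _ _ h1 h2.
set e := (2 / 2 ^+ l : R) in hb *.
have e0 : 0 <= e by rewrite /e divr_ge0 // exprn_ge0.
have ea : 0 <= e * (`|x|%N)%:R by rewrite mulr_ge0.
case: (ltrgtP x 0) => hx.
- rewrite ltr0_sgz // mulN1r rmorphN /= .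
  have -> : x = - (`|x|%N)%:Z by rewrite ltz0_abs ?opprK.
  rewrite rmorphN /= !mulrN !mulrDl !mul1r.
  move: hr hb ea; rewrite -!natz. lra.
- rewrite gtr0_sgz // mul1r.
  have -> : x = (`|x|%N)%:Z by rewrite gtz0_abs.
  rewrite !mulrDl !mul1r /=.
  move: hr hb ea; rewrite -!natz. lra.
- by rewrite hx sgz0 mul0r /= !mulr0 lexx.
Qed.
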